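(* Over the family of 3-periodics of $E$: (i) the locus of the barycenter $X_2$ (triangle center function $h=1/s_1$) is the ellipse $x^2/(k_2a)^2+y^2/(k_2b)^2=1$ with $k_2=\dfrac{2\delta-a^2-b^2}{3c^2}$; (ii) the locus of the Gergonne point $X_7$ ($h=\dfrac{1}{s_1(s_2+s_3-s_1)}$) is the ellipse $x^2/(k_7a)^2+y^2/(k_7b)^2=1$ with $k_7=\dfrac{2\delta-a^2-b^2}{c^2}$; (iii) the locus of $X_{57}$ ($h=\dfrac{1}{s_2+s_3-s_1}$) is the ellipse $x^2/(k_{57}a)^2+y^2/(k_{57}b)^2=1$ with $k_{57}=\dfrac{c^2}{\delta}$. In particular each of these loci is an ellipse similar to $E$ (concentric and axis-aligned with it).
   Context: Fix real numbers $a>b>0$, let $E$ be the ellipse $x^2/a^2+y^2/b^2=1$, $c^2=a^2-b^2$ and $\delta=\sqrt{a^4-a^2b^2+b^4}$. A 3-periodic is a non-degenerate triangle $P_1P_2P_3$ with all vertices on $E$ such that at each vertex $P_j$ the normal line to $E$ at $P_j$ bisects the interior angle of the triangle at $P_j$. For a triangle let $s_1=|P_2P_3|$, $s_2=|P_3P_1|$, $s_3=|P_1P_2|$. Given a triangle center function $h(s_1,s_2,s_3)$, the center $X_h$ is the point with trilinears $p:q:r=h(s_1,s_2,s_3):h(s_2,s_3,s_1):h(s_3,s_1,s_2)$, i.e. the Cartesian point $\dfrac{p s_1P_1+q s_2P_2+r s_3P_3}{p s_1+q s_2+r s_3}$. The locus of $X_h$ is the set of points $X_h(T)$ over all 3-periodics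 $T$. *)

(* Defs.v *)
From Stdlib Require Import Reals Lra.
Open Scope R_scope.

Definition pt := (R * R)%type.

Definition padd (P Q : pt) : pt := (fst P + fst Q, snd P + snd Q).
Definition psub (P Q : pt) : pt := (fst P - fst Q, snd P - snd Q).
Definition pscale (k : R) (P : pt) : pt := (k * fst P, k * snd P).
Definition cross (u v : pt) : R := fst u * snd v - snd u * fst v.
Definition dist (P Q : pt) : R :=
  sqrt ((fst P - fst Q) ^ 2 + (snd P - snd Q) ^ 2).

Definition on_ellipse (a b : R) (P : pt) : Prop :=
  fst P ^ 2 / a ^ 2 + snd P ^ 2 / b ^ 2 = 1.

(* a normal vector to E at P (gradient of x^2/a^2+y^2/b^2, up to factor 2) *)
Definition ell_normal (a b : R) (P : pt) : pt := (fst P / a ^ 2, snd P / b ^ 2).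

Definition unit_to (P Q : pt) : pt := pscale (/ dist P Q) (psub Q P).

(* The normal line to E at P bisects the interior angle QPR of triangle PQR:
   the normal direction is parallel to the interior bisector direction
   (unit vector PQ) + (unit vector PR). *)
Definition normal_bisects (a b : R) (P Q S : pt) : Prop :=
  cross (ell_normal a b P) (padd (unit_to P Q) (unit_to P S)) = 0.

Definition nondegenerate (P1 P2 P3 : pt) : Prop :=
  cross (psub P2 P1) (psub P3 P1) <> 0.

Definition three_periodic (a b : R) (P1 P2 P3 : pt) : Prop :=
  nondegenerate P1 P2 P3 /\
  on_ellipse a b P1 /\ on_ellipse a b P2 /\ on_ellipse a b P3 /\
  normal_bisects a b P1 P2 P3 /\
  normal_bisects a b P2 P3 P1 /\
  normal_bisects a b P3 P1 P2.

(* triangle center X_h with trilinears h(s1,s2,s3):h(s2,s3,s1):h(s3,s1,s2) *)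
Definition center (h : R -> R -> R -> R) (P1 P2 P3 : pt) : pt :=
  let s1 := dist P2 P3 in
  let s2 := dist P3 P1 in
  let s3 := dist P1 P2 in
  let p := h s1 s2 s3 in
  let q := h s2 s3 s1 in
  let r := h s3 s1 s2 in
  pscale (/ (p * s1 + q * s2 + r * s3))
    (padd (pscale (p * s1) P1) (padd (pscale (q * s2) P2) (pscale (r * s3) P3))).

Definition in_locus (a b : R) (h : R -> R -> R -> R) (X : pt) : Prop :=
  exists P1 P2 P3, three_periodic a b P1 P2 P3 /\ center h P1 P2 P3 = X.

Definition h2 (s1 s2 s3 : R) : R := / s1.
Definition h7 (s1 s2 s3 : R) : R := / (s1 * (s2 + s3 - s1)).
Definition h57 (s1 s2 s3 : R) : R := / (s2 + s3 - s1).

Definition csq (a b : R) : R := a ^ 2 - b ^ 2.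
Definition delta (a b : R) : R := sqrt (a ^ 4 - a ^ 2 * b ^ 2 + b ^ 4).
Definition k2 (a b : R) : R := (2 * delta a b - a ^ 2 - b ^ 2) / (3 * csq a b).
Definition k7 (a b : R) : R := (2 * delta a b - a ^ 2 - b ^ 2) / csq a b.
Definition k57 (a b : R) : R := csq a b / delta a b.

Definition on_scaled_ellipse (k a b : R) (X : pt) : Prop :=
  fst X ^ 2 / (k * a) ^ 2 + snd X ^ 2 / (k * b) ^ 2 = 1.

(* Main.v *)
From Pilot Require Import Defs.
From Stdlib Require Import Reals Lra Nsatz.
From Coquelicot Require Import Complex.
Import Pilot.Defs.
Open Scope R_scope.
Ltac nsatzp := repeat match goal with H : _ |- _ => progress (simpl pow in H) end; simpl pow; nsatz.

Lemma Csth : Setoid_Theory C (@eq C).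
Proof. constructor;red;intros;subst;trivial. Qed.
#[global]
Instance Cops: (@Ring_ops C (RtoC 0) (RtoC 1) Cplus Cmult Cminus Copp (@eq C)).
Defined.
#[global]
Instance Cri : (Ring (Ro:=Cops)).
Proof.
constructor;
try (try apply Csth;
   try (unfold respectful, Proper; unfold equality; unfold eq_notation in *;
  intros; try rewrite H; try rewrite H0; reflexivity)); intros;
  cbv [eq_notation add_notation mul_notation opp_notation zero_notation one_notation equality addition multiplication opposite zero one Cops]; try ring.
Defined.
#[global]
Instance Ccri: (Cring (Rr:=Cri)).
Proof. red. intros. cbv [eq_notation add_notation mul_notation opp_notation zero_notation one_notation equality addition multiplication opposite zero one Cops]; ring. Defined.
Lemma C_one_zero: RtoC 1 <> RtoC 0.
Proof. intro H; apply RtoC_inj in H; lra. Qed.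
#[global]
Instance Cdi : (Integral_domain (Rcr:=Ccri)).
Proof.
constructor.
- intros x y H. cbv [eq_notation add_notation mul_notation opp_notation zero_notation one_notation equality addition multiplication opposite zero one Cops] in *.
  destruct (Ceq_dec x 0); [left;auto|right].
  replace y with (x*y/x)%C by (field; auto). rewrite H. field. auto.
- exact C_one_zero.
Defined.

Section CX.
Local Open Scope C_scope.
Definition two : C := RtoC 1 + RtoC 1.
Definition Qf (k g x y : C) := x*x + y*y - k*(x*x*y*y + RtoC 1) - two*g*x*y.

Lemma coreA (k g z1 z2 z3 i12 i13 i23 : C) :
  (z1-z2)*i12 = RtoC 1 -> (z1-z3)*i13 = RtoC 1 -> (z2-z3)*i23 = RtoC 1 ->
  Qf k g z1 z2 = 0 -> Qf k g z1 z3 = 0 -> Qf k g z2 z3 = 0 ->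
  z1+z2+z3 + k*(z1*z2*z3) = 0 /\ RtoC 1 + two*g + k*(z1*z2+z1*z3+z2*z3) = 0.
Proof. unfold Qf, two; intros; split; nsatz. Qed.

Lemma conjstep (k z1 z2 z3 w1 w2 w3 : C) :
  z1*w1 = RtoC 1 -> z2*w2 = RtoC 1 -> z3*w3 = RtoC 1 ->
  w1+w2+w3 + k*(w1*w2*w3) = 0 -> z1*z2+z1*z3+z2*z3 + k = 0.
Proof. intros; nsatz. Qed.

Lemma chordB (k g z1 z2 z3 w3: C) : z3*w3 = RtoC 1 ->
  z1+z2+z3 + k*(z1*z2*z3) = 0 -> z1*z2+z1*z3+z2*z3 + k = 0 -> k*k = RtoC 1 + two*g ->
  Qf k g z1 z2 = 0.
Proof. unfold Qf, two; intros; nsatz. Qed.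

Lemma vieta (k w z1 z2 z3 i12 i13 i23 : C) :
  (z1-z2)*i12 = RtoC 1 -> (z1-z3)*i13 = RtoC 1 -> (z2-z3)*i23 = RtoC 1 ->
  z1*z1*z1 + k*w*z1*z1 - k*z1 - w = 0 ->
  z2*z2*z2 + k*w*z2*z2 - k*z2 - w = 0 ->
  z3*z3*z3 + k*w*z3*z3 - k*z3 - w = 0 ->
  z1+z2+z3 + k*w = 0 /\ z1*z2+z1*z3+z2*z3 + k = 0 /\ z1*z2*z3 = w.
Proof. intros; split; [|split]; nsatz. Qed.

Lemma X7C (z1 z2 z3 w1 w2 w3 k G1 G2 G3: C) :
  z1*w1 = RtoC 1 -> z2*w2 = RtoC 1 -> z3*w3 = RtoC 1 ->
  z1+z2+z3 + k*(z1*z2*z3) = 0 -> z1*z2+z1*z3+z2*z3 + k = 0 ->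
  G1 = two - (z2*w3 + w2*z3) -> G2 = two - (z3*w1+w3*z1) -> G3 = two - (z1*w2+w1*z2) ->
  z1*(G3+G1-G2)*(G1+G2-G3) + z2*(G2+G3-G1)*(G1+G2-G3) + z3*(G2+G3-G1)*(G3+G1-G2)
  = (z1+z2+z3)*((G3+G1-G2)*(G1+G2-G3) + (G2+G3-G1)*(G1+G2-G3) + (G2+G3-G1)*(G3+G1-G2)).
Proof. unfold two; intros; subst G1 G2 G3; nsatz. Qed.

Lemma X57C (z1 z2 z3 w1 w2 w3 k G1 G2 G3: C) :
  z1*w1 = RtoC 1 -> z2*w2 = RtoC 1 -> z3*w3 = RtoC 1 ->
  z1+z2+z3 + k*(z1*z2*z3) = 0 -> z1*z2+z1*z3+z2*z3 + k = 0 ->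
  G1 = two - (z2*w3 + w2*z3) -> G2 = two - (z3*w1+w3*z1) -> G3 = two - (z1*w2+w1*z2) ->
  (two+RtoC 1+k*k)*(G1*z1*(G3+G1-G2)*(G1+G2-G3) + G2*z2*(G2+G3-G1)*(G1+G2-G3) + G3*z3*(G2+G3-G1)*(G3+G1-G2))
  = (two*two)*(z1+z2+z3)*(G1*(G3+G1-G2)*(G1+G2-G3) + G2*(G2+G3-G1)*(G1+G2-G3) + G3*(G2+G3-G1)*(G3+G1-G2)).
Proof. unfold two; intros; subst G1 G2 G3; nsatz. Qed.

End CX.

Lemma kappa_facts (a b : R) : 0 < b -> b < a ->
  let c2 := a^2 - b^2 in let s := a^2+b^2 in let k := k7 a b in
  0 < k /\ k < 1 /\ k^2*c2 + 2*k*s - 3*c2 = 0 /\ k * c2 + s = 2 * delta a b /\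
  k2 a b = k/3 /\ k57 a b = 4*k/(3+k^2).
Proof.
  intros hb hab c2 s k.
  assert (hc : 0 < c2) by (unfold c2; replace (a^2-b^2) with ((a-b)*(a+b)) by ring; apply Rmult_lt_0_compat; lra).
  assert (hin : 0 < a^4 - a^2*b^2 + b^4) by (replace (a^4 - a^2*b^2 + b^4) with ((a^2-b^2)^2 + a^2*b^2) by ring; assert (0 < a^2*b^2) by (apply Rmult_lt_0_compat; nra); nra).
  assert (hd2 : delta a b ^2 = a^4 - a^2*b^2 + b^4).
  { unfold delta. rewrite <- Rsqr_pow2, Rsqr_sqrt; lra. }
  assert (hd : 0 < delta a b) by (unfold delta; apply sqrt_lt_R0; lra).
  assert (hk : k * c2 + s = 2 * delta a b).
  { unfold k, k7, csq, c2, s. fold c2. field. unfold c2; nra. }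
  assert (hq : k^2*c2 + 2*k*s - 3*c2 = 0).
  { apply (Rmult_eq_reg_l c2); [|lra].
    replace (c2 * (k ^ 2 * c2 + 2 * k * s - 3 * c2)) with ((k*c2+s)^2 - s^2 - 3*c2^2) by ring.
    rewrite hk. unfold s, c2. nra. }
  assert (hk0 : 0 < k).
  { assert (2*delta a b > s).
    { apply Rsqr_incrst_0; unfold Rsqr; [|unfold s; nra|lra].
      replace (2*delta a b * (2*delta a b)) with (4 * delta a b ^2) by ring. rewrite hd2. assert (0 < c2*c2) by nra. unfold c2 in *; unfold s; nra. }
    nra. }
  repeat split; auto.
  - assert (delta a b < a^2).
    { apply Rsqr_incrst_0; unfold Rsqr; [| lra | nra].
      replace (delta a b * delta a b) with (delta a b^2) by ring. rewrite hd2. assert (0 < b^2*c2) by (apply Rmult_lt_0_compat; nra). unfold c2 in *; nra. }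
    unfold k, k7, csq. apply (Rmult_lt_reg_r (a^2-b^2)); [fold c2; lra|]. field_simplify; [|fold c2;lra]. nra.
  - unfold k2, k, k7. field. unfold csq; nra.
  - unfold k57. fold k. unfold csq. fold c2.
    apply (Rmult_eq_reg_l (delta a b * (3 + k^2))). 2: { apply Rmult_integral_contrapositive; split; nra. }
    field_simplify; [| nra | lra].
    nra.
Qed.

Lemma pow2_gt_0 (x : R) : x <> 0 -> 0 < x^2.
Proof. intro; rewrite <- Rsqr_pow2; apply Rsqr_pos_lt; auto. Qed.

Definition gg (X1 Y1 X2 Y2 : R) := 1 - (X1*X2 + Y1*Y2).
Definition rho (X1 Y1 X2 Y2 : R) := X1*X2 - Y1*Y2.

Lemma dist_eq (a b X1 Y1 X2 Y2 : R) :
  dist (a*X1, b*Y1) (a*X2, b*Y2) = sqrt (a^2*(X1-X2)^2 + b^2*(Y1-Y2)^2).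
Proof. unfold dist; simpl; f_equal; ring. Qed.

Lemma dist2_eq (a b X1 Y1 X2 Y2 : R) : X1^2+Y1^2 = 1 -> X2^2+Y2^2 = 1 ->
  a^2*(X1-X2)^2 + b^2*(Y1-Y2)^2 = gg X1 Y1 X2 Y2 * ((a^2+b^2) - (a^2-b^2)*rho X1 Y1 X2 Y2).
Proof. unfold gg, rho; intros; nsatzp. Qed.

Lemma gg_alt (X1 Y1 X2 Y2 : R) : X1^2+Y1^2 = 1 -> X2^2+Y2^2 = 1 ->
  gg X1 Y1 X2 Y2 = ((X1-X2)^2 + (Y1-Y2)^2)/2.
Proof. unfold gg; intros. apply (Rmult_eq_reg_l 2); [|lra]. field_simplify. nsatzp. Qed.

Lemma gg_pos (X1 Y1 X2 Y2 : R) : X1^2+Y1^2 = 1 -> X2^2+Y2^2 = 1 ->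
  (X1,Y1) <> (X2,Y2) -> 0 < gg X1 Y1 X2 Y2.
Proof.
  intros h1 h2 hne. rewrite gg_alt by auto.
  destruct (Req_dec X1 X2) as [e|e].
  - destruct (Req_dec Y1 Y2) as [f|f]. { subst; contradiction. }
    assert (0 < (Y1-Y2)^2) by (apply pow2_gt_0; lra). nra.
  - assert (0 < (X1-X2)^2) by (apply pow2_gt_0; lra). nra.
Qed.

Lemma gg_sym (X1 Y1 X2 Y2 : R) : gg X1 Y1 X2 Y2 = gg X2 Y2 X1 Y1.
Proof. unfold gg; ring. Qed.
Lemma rho_sym (X1 Y1 X2 Y2 : R) : rho X1 Y1 X2 Y2 = rho X2 Y2 X1 Y1.
Proof. unfold rho; ring. Qed.

Lemma dist_pos (a b X1 Y1 X2 Y2 : R) : 0 < b -> b < a -> X1^2+Y1^2 = 1 -> X2^2+Y2^2 = 1 ->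
  (X1,Y1) <> (X2,Y2) -> 0 < dist (a*X1, b*Y1) (a*X2, b*Y2).
Proof.
  intros hb hab h1 h2 hne. rewrite dist_eq. apply sqrt_lt_R0.
  assert (0 <= a^2*(X1-X2)^2) by (apply Rmult_le_pos; apply pow2_ge_0).
  assert (0 <= b^2*(Y1-Y2)^2) by (apply Rmult_le_pos; apply pow2_ge_0).
  destruct (Req_dec X1 X2) as [e|e].
  - destruct (Req_dec Y1 Y2) as [f|f]. { subst; contradiction. }
    assert (0 < (Y1-Y2)^2) by (apply pow2_gt_0; lra).
    assert (0 < b^2*(Y1-Y2)^2) by (apply Rmult_lt_0_compat; [apply pow2_gt_0; lra| lra]). lra.
  - assert (0 < (X1-X2)^2) by (apply pow2_gt_0; lra).
    assert (0 < a^2*(X1-X2)^2) by (apply Rmult_lt_0_compat; [apply pow2_gt_0; lra| lra]). lra.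
Qed.

Lemma chord_fwd (a b m X1 Y1 X2 Y2 : R) : 0 < b -> b < a -> X1^2+Y1^2 = 1 -> X2^2+Y2^2 = 1 ->
  (X1,Y1) <> (X2,Y2) -> 0 < m ->
  dist (a*X1, b*Y1) (a*X2, b*Y2) * m = gg X1 Y1 X2 Y2 ->
  gg X1 Y1 X2 Y2 = m^2 * ((a^2+b^2) - (a^2-b^2)*rho X1 Y1 X2 Y2).
Proof.
  intros hb hab h1 h2 hne hm hd.
  pose proof (gg_pos _ _ _ _ h1 h2 hne) as hg.
  pose proof (dist2_eq a b _ _ _ _ h1 h2) as hd2.
  rewrite dist_eq in hd.
  assert (hs : 0 <= a^2*(X1-X2)^2 + b^2*(Y1-Y2)^2) by (apply Rplus_le_le_0_compat; apply Rmult_le_pos; apply pow2_ge_0).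
  assert (sqrt (a^2*(X1-X2)^2 + b^2*(Y1-Y2)^2) ^2 = a^2*(X1-X2)^2 + b^2*(Y1-Y2)^2)
    by (rewrite <- Rsqr_pow2; apply Rsqr_sqrt; auto).
  set (d := sqrt (a^2*(X1-X2)^2 + b^2*(Y1-Y2)^2)) in *.
  set (g := gg X1 Y1 X2 Y2) in *.
  set (Z := (a^2+b^2) - (a^2-b^2)*rho X1 Y1 X2 Y2) in *.
  assert (g*g = m^2 * (g * Z)) by (rewrite <- hd2, <- H, <- hd; ring).
  apply (Rmult_eq_reg_l g); [|lra]. nra.
Qed.

Lemma chord_bwd (a b m X1 Y1 X2 Y2 : R) : 0 < b -> b < a -> X1^2+Y1^2 = 1 -> X2^2+Y2^2 = 1 ->
  0 < m ->
  gg X1 Y1 X2 Y2 = m^2 * ((a^2+b^2) - (a^2-b^2)*rho X1 Y1 X2 Y2) ->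
  dist (a*X1, b*Y1) (a*X2, b*Y2) * m = gg X1 Y1 X2 Y2.
Proof.
  intros hb hab h1 h2 hm hc.
  pose proof (dist2_eq a b _ _ _ _ h1 h2) as hd2.
  rewrite dist_eq, hd2.
  assert (hg : 0 <= gg X1 Y1 X2 Y2) by (rewrite gg_alt by auto; apply Rmult_le_pos; [apply Rplus_le_le_0_compat; apply pow2_ge_0 | lra]).
  set (g := gg X1 Y1 X2 Y2) in *.
  set (Z := (a^2+b^2) - (a^2-b^2)*rho X1 Y1 X2 Y2) in *.
  replace (g * Z) with ((g/m)^2) by (rewrite hc; field; lra).
  rewrite sqrt_pow2. field; lra. unfold Rdiv; apply Rmult_le_pos; [lra| left; apply Rinv_0_lt_compat; lra].
Qed.

Lemma nb_unfold (a b X Y Xq Yq Xs Ys : R) : 0 < b -> b < a ->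
  let dQ := dist (a*X,b*Y) (a*Xq,b*Yq) in let dS := dist (a*X,b*Y) (a*Xs,b*Ys) in
  0 < dQ -> 0 < dS ->
  (normal_bisects a b (a*X,b*Y) (a*Xq,b*Yq) (a*Xs,b*Ys) <->
   (X/a*(b*(Yq-Y)) - Y/b*(a*(Xq-X)))/dQ + (X/a*(b*(Ys-Y)) - Y/b*(a*(Xs-X)))/dS = 0).
Proof.
  intros hb hab dQ dS hQ hS. unfold normal_bisects, cross, ell_normal, padd, unit_to, pscale, psub; cbn [fst snd].
  fold dQ dS.
  replace (a * X / a ^ 2 * (/ dQ * (b * Yq - b * Y) + / dS * (b * Ys - b * Y)) -
   b * Y / b ^ 2 * (/ dQ * (a * Xq - a * X) + / dS * (a * Xs - a * X))) with
   ((X/a*(b*(Yq-Y)) - Y/b*(a*(Xq-X)))/dQ + (X/a*(b*(Ys-Y)) - Y/b*(a*(Xs-X)))/dS).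
  2:{ field. repeat split; lra. }
  tauto.
Qed.

Lemma lagrange (a b X Y Xq Yq : R) : 0 < b -> b < a -> X^2+Y^2 = 1 -> Xq^2+Yq^2 = 1 ->
  (gg X Y Xq Yq)^2 + (X/a*(b*(Yq-Y)) - Y/b*(a*(Xq-X)))^2 =
  (X^2/a^2 + Y^2/b^2) * ((a*X - a*Xq)^2 + (b*Y - b*Yq)^2).
Proof.
  intros hb hab h1 h2. unfold gg.
  replace (1 - (X*Xq+Y*Yq)) with (-(X/a*(a*(Xq-X)) + Y/b*(b*(Yq-Y)))).
  2:{ replace (X/a*(a*(Xq-X))) with (X*(Xq-X)) by (field; lra).
       replace (Y/b*(b*(Yq-Y))) with (Y*(Yq-Y)) by (field; lra). nsatzp. }
  field. split; lra.
Qed.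

Lemma dist_sq (P Q : pt) : dist P Q ^2 = (fst P - fst Q)^2 + (snd P - snd Q)^2.
Proof. unfold dist. rewrite <- Rsqr_pow2. apply Rsqr_sqrt.
  apply Rplus_le_le_0_compat; apply pow2_ge_0. Qed.

Lemma bis_fwd (a b X Y Xq Yq Xs Ys : R) : 0 < b -> b < a ->
  X^2+Y^2 = 1 -> Xq^2+Yq^2 = 1 -> Xs^2+Ys^2 = 1 ->
  0 < dist (a*X,b*Y) (a*Xq,b*Yq) -> 0 < dist (a*X,b*Y) (a*Xs,b*Ys) ->
  0 <= gg X Y Xq Yq -> 0 <= gg X Y Xs Ys ->
  normal_bisects a b (a*X,b*Y) (a*Xq,b*Yq) (a*Xs,b*Ys) ->
  gg X Y Xq Yq / dist (a*X,b*Y) (a*Xq,b*Yq) = gg X Y Xs Ys / dist (a*X,b*Y) (a*Xs,b*Ys).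
Proof.
  intros hb hab h1 h2 h3 hQ hS gQ gS hn.
  apply nb_unfold in hn; auto.
  pose proof (lagrange a b X Y Xq Yq hb hab h1 h2) as LQ.
  pose proof (lagrange a b X Y Xs Ys hb hab h1 h3) as LS.
  pose proof (dist_sq (a*X,b*Y) (a*Xq,b*Yq)) as DQ. cbn [fst snd] in DQ.
  pose proof (dist_sq (a*X,b*Y) (a*Xs,b*Ys)) as DS. cbn [fst snd] in DS.
  set (dQ := dist (a*X,b*Y) (a*Xq,b*Yq)) in *.
  set (dS := dist (a*X,b*Y) (a*Xs,b*Ys)) in *.
  set (TQ := X/a*(b*(Yq-Y)) - Y/b*(a*(Xq-X))) in *.
  set (TS := X/a*(b*(Ys-Y)) - Y/b*(a*(Xs-X))) in *.
  set (N := X^2/a^2 + Y^2/b^2) in *.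
  rewrite <- DQ in LQ. rewrite <- DS in LS.
  set (rQ := gg X Y Xq Yq / dQ). set (rS := gg X Y Xs Ys / dS).
  assert (E1 : rQ^2 + (TQ/dQ)^2 = N).
  { transitivity ((gg X Y Xq Yq ^2 + TQ^2)/dQ^2). unfold rQ; field; lra. rewrite LQ; field; lra. }
  assert (E2 : rS^2 + (TS/dS)^2 = N).
  { transitivity ((gg X Y Xs Ys ^2 + TS^2)/dS^2). unfold rS; field; lra. rewrite LS; field; lra. }
  assert (TQ/dQ = - (TS/dS)) by lra.
  assert (0 <= rQ) by (unfold rQ; apply Rmult_le_pos; [lra | left; apply Rinv_0_lt_compat; lra]).
  assert (0 <= rS) by (unfold rS; apply Rmult_le_pos; [lra | left; apply Rinv_0_lt_compat; lra]).
  assert (rQ^2 = rS^2).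
  { rewrite H in E1. replace ((- (TS/dS))^2) with ((TS/dS)^2) in E1 by ring. lra. }
  apply Rsqr_inj; auto. rewrite !Rsqr_pow2. auto.
Qed.

Lemma N_gg (a b X Y Xq Yq : R) : a <> 0 -> b <> 0 -> X^2+Y^2 = 1 ->
  gg X Y Xq Yq = -(X/a*(a*(Xq-X)) + Y/b*(b*(Yq-Y))).
Proof. intros ha hb h1. unfold gg. replace (X/a*(a*(Xq-X))) with (X*(Xq-X)) by (field; lra).
  replace (Y/b*(b*(Yq-Y))) with (Y*(Yq-Y)) by (field; lra). nsatzp. Qed.

Lemma bis_bwd (a b m X Y Xq Yq Xs Ys : R) : 0 < b -> b < a -> 0 < m ->
  X^2+Y^2 = 1 -> Xq^2+Yq^2 = 1 -> Xs^2+Ys^2 = 1 ->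
  0 < dist (a*X,b*Y) (a*Xq,b*Yq) -> 0 < dist (a*X,b*Y) (a*Xs,b*Ys) ->
  dist (a*X,b*Y) (a*Xq,b*Yq) * m = gg X Y Xq Yq ->
  dist (a*X,b*Y) (a*Xs,b*Ys) * m = gg X Y Xs Ys ->
  cross (psub (a*Xq,b*Yq) (a*X,b*Y)) (psub (a*Xs,b*Ys) (a*X,b*Y)) <> 0 ->
  normal_bisects a b (a*X,b*Y) (a*Xq,b*Yq) (a*Xs,b*Ys).
Proof.
  intros hb hab hm h1 h2 h3 hQ hS mQ mS hc.
  apply nb_unfold; auto.
  pose proof (lagrange a b X Y Xq Yq hb hab h1 h2) as LQ.
  pose proof (lagrange a b X Y Xs Ys hb hab h1 h3) as LS.
  pose proof (dist_sq (a*X,b*Y) (a*Xq,b*Yq)) as DQ. cbn [fst snd] in DQ.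
  pose proof (dist_sq (a*X,b*Y) (a*Xs,b*Ys)) as DS. cbn [fst snd] in DS.
  assert (NQ : gg X Y Xq Yq = -(X/a*(a*(Xq-X)) + Y/b*(b*(Yq-Y)))).
  { apply N_gg; auto; lra. }
  assert (NS : gg X Y Xs Ys = -(X/a*(a*(Xs-X)) + Y/b*(b*(Ys-Y)))).
  { apply N_gg; auto; lra. }
  unfold cross, psub in hc; cbn [fst snd] in hc.
  set (dQ := dist (a*X,b*Y) (a*Xq,b*Yq)) in *.
  set (dS := dist (a*X,b*Y) (a*Xs,b*Ys)) in *.
  set (TQ := X/a*(b*(Yq-Y)) - Y/b*(a*(Xq-X))) in *.
  set (TS := X/a*(b*(Ys-Y)) - Y/b*(a*(Xs-X))) in *.
  set (N := X^2/a^2 + Y^2/b^2) in *.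
  rewrite <- DQ in LQ. rewrite <- DS in LS.
  assert (E1 : m^2 + (TQ/dQ)^2 = N).
  { replace m with (gg X Y Xq Yq / dQ) by (rewrite <- mQ; field; lra).
    transitivity ((gg X Y Xq Yq ^2 + TQ^2)/dQ^2). field; lra. rewrite LQ; field; lra. }
  assert (E2 : m^2 + (TS/dS)^2 = N).
  { replace m with (gg X Y Xs Ys / dS) by (rewrite <- mS; field; lra).
    transitivity ((gg X Y Xs Ys ^2 + TS^2)/dS^2). field; lra. rewrite LS; field; lra. }
  assert (hp : (TQ/dQ - TS/dS) * (TQ/dQ + TS/dS) = 0) by (replace ((TQ/dQ - TS/dS) * (TQ/dQ + TS/dS)) with ((TQ/dQ)^2 - (TS/dS)^2) by ring; lra).
  apply Rmult_integral in hp. destruct hp as [hp|hp]; [|exact hp].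
  exfalso. apply hc.
  assert (hN : 0 < N).
  { unfold N. assert (0 < a^2) by (apply pow2_gt_0; lra). assert (0 < b^2) by (apply pow2_gt_0; lra).
    assert (0 <= X^2/a^2) by (apply Rmult_le_pos; [apply pow2_ge_0| left; apply Rinv_0_lt_compat; lra]).
    assert (0 <= Y^2/b^2) by (apply Rmult_le_pos; [apply pow2_ge_0| left; apply Rinv_0_lt_compat; lra]).
    destruct (Req_dec X 0) as [hX|hX].
    - assert (hY : Y^2 = 1) by (rewrite hX in h1; replace (0^2) with 0 in h1 by ring; lra). assert (Y^2/b^2 > 0) by (rewrite hY; unfold Rdiv; rewrite Rmult_1_l; apply Rinv_0_lt_compat; lra). lra.
    - assert (0 < X^2/a^2) by (apply Rmult_lt_0_compat; [apply pow2_gt_0; auto| apply Rinv_0_lt_compat; lra]). lra. }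
  assert (hT0 : TQ/dQ = TS/dS) by lra.
  assert (hT : TQ = TS/dS*dQ) by (rewrite <- hT0; field; lra).
  apply (Rmult_eq_reg_l N); [|lra]. rewrite Rmult_0_r.
  assert (EQ : N * ((a * Xq - a * X) * (b * Ys - b * Y) - (b * Yq - b * Y) * (a * Xs - a * X)) =
    (X/a*(a*(Xq-X)) + Y/b*(b*(Yq-Y)))*TS - (X/a*(a*(Xs-X)) + Y/b*(b*(Ys-Y)))*TQ).
  { unfold N, TS, TQ. field. split; lra. }
  rewrite EQ.
  replace (X/a*(a*(Xq-X)) + Y/b*(b*(Yq-Y))) with (- gg X Y Xq Yq) by (rewrite NQ; ring).
  replace (X/a*(a*(Xs-X)) + Y/b*(b*(Ys-Y))) with (- gg X Y Xs Ys) by (rewrite NS; ring).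
  rewrite <- mQ, <- mS, hT. field. lra.
Qed.

Definition pc (k : R) (w z : C) : C := (z*z*z + RtoC k*w*z*z - RtoC k*z - w)%C.

Lemma root_poly (k u v C0 S0 : R) : u^2+v^2 = 1 -> C0^2+S0^2 = 1 ->
  (3*u^2*v - v^3)*(C0^2-S0^2) - (u^3-3*u*v^2)*(2*C0*S0) + k*v = 0 ->
  pc k (C0,S0) ((u^2-v^2)*C0 + 2*u*v*S0, 2*u*v*C0 - (u^2-v^2)*S0) = (0,0).
Proof.
  intros h1 h2 hg. unfold pc, Cminus, Copp, Cmult, Cplus, RtoC; cbn [fst snd].
  f_equal; nsatzp.
Qed.

Lemma zunit (u v C0 S0 : R) : u^2+v^2 = 1 -> C0^2+S0^2 = 1 ->
  ((u^2-v^2)*C0 + 2*u*v*S0)^2 + (2*u*v*C0 - (u^2-v^2)*S0)^2 = 1.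
Proof. intros; nsatzp. Qed.

Lemma zdist (ui vi uj vj C0 S0 : R) : ui^2+vi^2=1 -> uj^2+vj^2=1 -> C0^2+S0^2 = 1 ->
 (ui^2-vi^2)*C0 + 2*ui*vi*S0 = (uj^2-vj^2)*C0 + 2*uj*vj*S0 ->
 2*ui*vi*C0 - (ui^2-vi^2)*S0 = 2*uj*vj*C0 - (uj^2-vj^2)*S0 ->
 vj*ui - uj*vi = 0.
Proof. intros. nsatzp. Qed.

Lemma sin3_eq (t p : R) : sin (3*t - 2*p) =
  (3*cos t^2*sin t - sin t^3)*(cos p^2-sin p^2) - (cos t^3-3*cos t*sin t^2)*(2*cos p*sin p).
Proof.
  rewrite sin_minus. replace (3*t) with (2*t+t) by ring.
  rewrite sin_plus, cos_plus, !sin_2a, !cos_2a. ring.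
Qed.

Lemma unit_trig (t : R) : cos t ^2 + sin t ^2 = 1.
Proof. pose proof (sin2_cos2 t). unfold Rsqr in H. lra. Qed.

Lemma angle_of (Cw Sw : R) : Cw^2+Sw^2 = 1 -> exists p, cos p = Cw /\ sin p = Sw.
Proof.
  intros h.
  assert (hb : -1 <= Cw <= 1) by nra.
  destruct (Rle_dec 0 Sw) as [hs|hs].
  - exists (acos Cw). split. apply cos_acos; auto.
    rewrite sin_acos by auto. replace (1 - Cw²) with (Sw²) by (unfold Rsqr; lra).
    apply sqrt_Rsqr; auto.
  - exists (- acos Cw). split. rewrite cos_neg. apply cos_acos; auto.
    rewrite sin_neg, sin_acos by auto. replace (1 - Cw²) with (Sw²) by (unfold Rsqr; lra).
    rewrite sqrt_Rsqr_abs, Rabs_left; lra.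
Qed.

Definition Zof (p t : R) : C :=
  ((cos t^2-sin t^2)*cos p + 2*cos t*sin t*sin p, 2*cos t*sin t*cos p - (cos t^2-sin t^2)*sin p).

Lemma sinPIk (x : R) : sin (x + PI) = - sin x.
Proof. apply neg_sin. Qed.

Lemma roots_exist (k Cw Sw : R) : 0 < k < 1 -> Cw^2+Sw^2 = 1 ->
  exists z1 z2 z3 : C,
    fst z1 ^2 + snd z1 ^2 = 1 /\ fst z2 ^2 + snd z2 ^2 = 1 /\ fst z3 ^2 + snd z3 ^2 = 1 /\
    z1 <> z2 /\ z1 <> z3 /\ z2 <> z3 /\
    pc k (Cw,Sw) z1 = (0,0) /\ pc k (Cw,Sw) z2 = (0,0) /\ pc k (Cw,Sw) z3 = (0,0).
Proof.
  intros hk hw. destruct (angle_of Cw Sw hw) as [p [hc hs]].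
  set (f := fun t => sin (3*t - 2*p) + k * sin t).
  assert (hf : continuity f) by (unfold f; reg).
  set (t0 := (PI/2 + 2*p)/3).
  set (t1 := (PI/2 + 2*p + PI)/3).
  set (t2 := (PI/2 + 2*p + 2*PI)/3).
  set (t3 := (PI/2 + 2*p + 3*PI)/3).
  assert (hPI := PI_RGT_0).
  assert (s0 : sin (3*t0 - 2*p) = 1) by (unfold t0; replace (3 * ((PI / 2 + 2 * p) / 3) - 2 * p) with (PI/2) by field; apply sin_PI2).
  assert (s1 : sin (3*t1 - 2*p) = -1) by (unfold t1; replace (3 * ((PI / 2 + 2 * p + PI) / 3) - 2 * p) with (PI/2 + PI) by field; rewrite sinPIk, sin_PI2; ring).
  assert (s2 : sin (3*t2 - 2*p) = 1) by (unfold t2; replace (3 * ((PI / 2 + 2 * p + 2*PI) / 3) - 2 * p) with (PI/2 + PI + PI) by field; rewrite !sinPIk, sin_PI2; ring).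
  assert (s3 : sin (3*t3 - 2*p) = -1) by (unfold t3; replace (3 * ((PI / 2 + 2 * p + 3*PI) / 3) - 2 * p) with (PI/2 + PI + PI + PI) by field; rewrite !sinPIk, sin_PI2; ring).
  assert (f0 : f t0 > 0) by (unfold f; rewrite s0; pose proof (SIN_bound t0); nra).
  assert (f1 : f t1 < 0) by (unfold f; rewrite s1; pose proof (SIN_bound t1); nra).
  assert (f2 : f t2 > 0) by (unfold f; rewrite s2; pose proof (SIN_bound t2); nra).
  assert (f3 : f t3 < 0) by (unfold f; rewrite s3; pose proof (SIN_bound t3); nra).
  destruct (IVT_cor f t0 t1 hf) as [r1 [hr1 fr1]]; [unfold t0, t1; lra | nra |].
  destruct (IVT_cor f t1 t2 hf) as [r2 [hr2 fr2]]; [unfold t1, t2; lra | nra |].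
  destruct (IVT_cor f t2 t3 hf) as [r3 [hr3 fr3]]; [unfold t2, t3; lra | nra |].
  assert (r1 <> t0) by (intro e; subst r1; lra). assert (r1 <> t1) by (intro e; subst r1; lra).
  assert (r2 <> t1) by (intro e; subst r2; lra). assert (r2 <> t2) by (intro e; subst r2; lra).
  assert (r3 <> t2) by (intro e; subst r3; lra). assert (r3 <> t3) by (intro e; subst r3; lra).
  assert (d3 : t3 - t0 = PI) by (unfold t3, t0; field).
  assert (hroot : forall r, f r = 0 -> pc k (Cw,Sw) (Zof p r) = (0,0)).
  { intros r fr. unfold Zof. rewrite <- hc, <- hs. apply root_poly.
    apply unit_trig. apply unit_trig. unfold f in fr. rewrite sin3_eq in fr. lra. }
  assert (hunit : forall r, fst (Zof p r) ^2 + snd (Zof p r) ^2 = 1).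
  { intros r. unfold Zof; cbn [fst snd]. apply zunit; apply unit_trig. }
  assert (hdist : forall r r', 0 < r' - r < PI -> Zof p r <> Zof p r').
  { intros r r' hrr e. unfold Zof in e. injection e. intros e2 e1.
    pose proof (zdist _ _ _ _ _ _ (unit_trig r) (unit_trig r') (unit_trig p) e1 e2) as hz.
    assert (sin (r' - r) > 0) by (apply sin_gt_0; lra).
    rewrite sin_minus in H5. lra. }
  exists (Zof p r1), (Zof p r2), (Zof p r3).
  repeat split; auto; apply hdist; lra.
Qed.


Definition sg (X1 Y1 X2 Y2 : R) := X1*X2 + Y1*Y2.

Lemma Qf_real (k g X1 Y1 X2 Y2 : R) : X1^2+Y1^2 = 1 -> X2^2+Y2^2 = 1 ->
  Qf (RtoC k) (RtoC g) (X1,Y1) (X2,Y2) =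
  (two * ((X1,Y1)*(X2,Y2)) * RtoC (sg X1 Y1 X2 Y2 - k*rho X1 Y1 X2 Y2 - g))%C.
Proof.
  intros h1 h2. unfold Qf, two, sg, rho, Cminus, Copp, Cmult, Cplus, RtoC; cbn [fst snd].
  f_equal; nsatzp.
Qed.

Lemma Qf_iff (k g X1 Y1 X2 Y2 : R) : X1^2+Y1^2 = 1 -> X2^2+Y2^2 = 1 ->
  (Qf (RtoC k) (RtoC g) (X1,Y1) (X2,Y2) = RtoC 0 <-> sg X1 Y1 X2 Y2 - k*rho X1 Y1 X2 Y2 - g = 0).
Proof.
  intros h1 h2. rewrite Qf_real by auto.
  set (r := sg X1 Y1 X2 Y2 - k*rho X1 Y1 X2 Y2 - g).
  split.
  - intro H. unfold two, Cmult, Cplus, RtoC in H; cbn [fst snd] in H. injection H. intros e2 e1. clear H.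
    assert (hw : (X1*X2 - Y1*Y2)^2 + (X1*Y2 + Y1*X2)^2 = 1) by (clear e1 e2; nsatzp).
    clearbody r.
    assert (hr : r^2 = 0) by (clear h1 h2; nsatzp). nra.
  - intro H. rewrite H. unfold two, Cmult, Cplus, RtoC; cbn [fst snd]. f_equal; ring.
Qed.

Lemma conj_unit (X Y : R) : X^2+Y^2 = 1 -> ((X,Y) * (X, Ropp Y))%C = RtoC 1.
Proof. intros h. unfold Cmult, RtoC; cbn [fst snd]. f_equal; nsatzp. Qed.

Lemma Gform (X1 Y1 X2 Y2 : R) :
  RtoC (2 * gg X1 Y1 X2 Y2) = (two - ((X1,Y1)*(X2, Ropp Y2) + (X1, Ropp Y1)*(X2,Y2)))%C.
Proof. unfold two, gg, Cminus, Copp, Cmult, Cplus, RtoC; cbn [fst snd]. f_equal; ring. Qed.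

Lemma X7R (X1 Y1 X2 Y2 X3 Y3 k : R) :
  X1^2+Y1^2 = 1 -> X2^2+Y2^2 = 1 -> X3^2+Y3^2 = 1 ->
  ((X1,Y1)+(X2,Y2)+(X3,Y3) + RtoC k*((X1,Y1)*(X2,Y2)*(X3,Y3)) = 0)%C ->
  ((X1,Y1)*(X2,Y2)+(X1,Y1)*(X3,Y3)+(X2,Y2)*(X3,Y3) + RtoC k = 0)%C ->
  let G1 := gg X2 Y2 X3 Y3 in let G2 := gg X3 Y3 X1 Y1 in let G3 := gg X1 Y1 X2 Y2 in
  let D1 := G2+G3-G1 in let D2 := G3+G1-G2 in let D3 := G1+G2-G3 in
  X1*D2*D3 + X2*D1*D3 + X3*D1*D2 = (X1+X2+X3)*(D2*D3+D1*D3+D1*D2) /\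
  Y1*D2*D3 + Y2*D1*D3 + Y3*D1*D2 = (Y1+Y2+Y3)*(D2*D3+D1*D3+D1*D2).
Proof.
  intros u1 u2 u3 E1 E2 G1 G2 G3 D1 D2 D3.
  pose proof (X7C (X1,Y1) (X2,Y2) (X3,Y3) (X1, Ropp Y1) (X2, Ropp Y2) (X3, Ropp Y3) (RtoC k)
     (RtoC (2*G1)) (RtoC (2*G2)) (RtoC (2*G3)) (conj_unit _ _ u1) (conj_unit _ _ u2) (conj_unit _ _ u3)
     E1 E2 (Gform _ _ _ _) (Gform _ _ _ _) (Gform _ _ _ _)) as H.
  clear E1 E2.
  pose proof (f_equal fst H) as Hx. pose proof (f_equal snd H) as Hy. clear H.
  unfold Cminus, Copp, Cmult, Cplus, RtoC in Hx, Hy; cbn [fst snd] in Hx, Hy.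
  subst D1 D2 D3. clearbody G1 G2 G3.
  split; lra.
Qed.

Lemma X57R (X1 Y1 X2 Y2 X3 Y3 k : R) :
  X1^2+Y1^2 = 1 -> X2^2+Y2^2 = 1 -> X3^2+Y3^2 = 1 ->
  ((X1,Y1)+(X2,Y2)+(X3,Y3) + RtoC k*((X1,Y1)*(X2,Y2)*(X3,Y3)) = 0)%C ->
  ((X1,Y1)*(X2,Y2)+(X1,Y1)*(X3,Y3)+(X2,Y2)*(X3,Y3) + RtoC k = 0)%C ->
  let G1 := gg X2 Y2 X3 Y3 in let G2 := gg X3 Y3 X1 Y1 in let G3 := gg X1 Y1 X2 Y2 in
  let D1 := G2+G3-G1 in let D2 := G3+G1-G2 in let D3 := G1+G2-G3 in
  (3+k^2)*(G1*X1*D2*D3 + G2*X2*D1*D3 + G3*X3*D1*D2) = 4*(X1+X2+X3)*(G1*D2*D3+G2*D1*D3+G3*D1*D2) /\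
  (3+k^2)*(G1*Y1*D2*D3 + G2*Y2*D1*D3 + G3*Y3*D1*D2) = 4*(Y1+Y2+Y3)*(G1*D2*D3+G2*D1*D3+G3*D1*D2).
Proof.
  intros u1 u2 u3 E1 E2 G1 G2 G3 D1 D2 D3.
  pose proof (X57C (X1,Y1) (X2,Y2) (X3,Y3) (X1, Ropp Y1) (X2, Ropp Y2) (X3, Ropp Y3) (RtoC k)
     (RtoC (2*G1)) (RtoC (2*G2)) (RtoC (2*G3)) (conj_unit _ _ u1) (conj_unit _ _ u2) (conj_unit _ _ u3)
     E1 E2 (Gform _ _ _ _) (Gform _ _ _ _) (Gform _ _ _ _)) as H.
  clear E1 E2.
  pose proof (f_equal fst H) as Hx. pose proof (f_equal snd H) as Hy. clear H.
  unfold two, Cminus, Copp, Cmult, Cplus, RtoC in Hx, Hy; cbn [fst snd] in Hx, Hy.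
  subst D1 D2 D3. clearbody G1 G2 G3.
  split; lra.
Qed.

Lemma center_gen (h : R->R->R->R) (P1 P2 P3 : pt) (w1 w2 w3 : R) :
  h (dist P2 P3) (dist P3 P1) (dist P1 P2) * dist P2 P3 = w1 ->
  h (dist P3 P1) (dist P1 P2) (dist P2 P3) * dist P3 P1 = w2 ->
  h (dist P1 P2) (dist P2 P3) (dist P3 P1) * dist P1 P2 = w3 ->
  center h P1 P2 P3 = (/(w1+w2+w3) * (w1*fst P1 + (w2*fst P2 + w3*fst P3)),
                       /(w1+w2+w3) * (w1*snd P1 + (w2*snd P2 + w3*snd P3))).
Proof. intros H1 H2 H3. unfold center, pscale, padd. cbv zeta. cbn [fst snd].
  rewrite H1, H2, H3. reflexivity. Qed.

Lemma dist_sym (P Q : pt) : dist P Q = dist Q P.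
Proof. unfold dist. f_equal. ring. Qed.

Lemma rho_ge (X1 Y1 X2 Y2 : R) : X1^2+Y1^2 = 1 -> X2^2+Y2^2 = 1 -> -1 <= rho X1 Y1 X2 Y2.
Proof. intros. unfold rho. assert (0 <= (X1+X2)^2 + (Y1-Y2)^2) by (apply Rplus_le_le_0_compat; apply pow2_ge_0). nra. Qed.

Lemma wavg (w1 w2 w3 X1 X2 X3 c lam : R) : w1+w2+w3 <> 0 ->
  w1*X1+w2*X2+w3*X3 = lam*(X1+X2+X3)*(w1+w2+w3) ->
  /(w1+w2+w3) * (w1*(c*X1) + (w2*(c*X2) + w3*(c*X3))) = c*(lam*(X1+X2+X3)).
Proof. intros h e. replace (w1*(c*X1) + (w2*(c*X2) + w3*(c*X3))) with (c*(w1*X1+w2*X2+w3*X3)) by ring.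
  rewrite e. field. auto. Qed.

Lemma w7 (D1 D2 D3 m X1 X2 X3 : R) : D1<>0 -> D2<>0 -> D3<>0 ->
  X1*D2*D3 + X2*D1*D3 + X3*D1*D2 = (X1+X2+X3)*(D2*D3+D1*D3+D1*D2) ->
  m/D1*X1 + m/D2*X2 + m/D3*X3 = 1*(X1+X2+X3)*(m/D1+m/D2+m/D3).
Proof. intros h1 h2 h3 e.
  replace (m/D1*X1 + m/D2*X2 + m/D3*X3) with (m*(X1*D2*D3 + X2*D1*D3 + X3*D1*D2)/(D1*D2*D3)) by (field; auto).
  rewrite e. field. auto. Qed.

Lemma w57 (D1 D2 D3 g1 g2 g3 k X1 X2 X3 : R) : D1<>0 -> D2<>0 -> D3<>0 -> 0 < k ->
  (3+k^2)*(g1*X1*D2*D3 + g2*X2*D1*D3 + g3*X3*D1*D2) = 4*(X1+X2+X3)*(g1*D2*D3+g2*D1*D3+g3*D1*D2) ->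
  g1/D1*X1 + g2/D2*X2 + g3/D3*X3 = 4/(3+k^2)*(X1+X2+X3)*(g1/D1+g2/D2+g3/D3).
Proof. intros h1 h2 h3 hk e.
  assert (0 < 3 + k^2) by nra.
  replace (g1/D1*X1 + g2/D2*X2 + g3/D3*X3) with ((3+k^2)*(g1*X1*D2*D3 + g2*X2*D1*D3 + g3*X3*D1*D2)/((3+k^2)*(D1*D2*D3))) by (field; repeat split; lra).
  rewrite e. field. repeat split; lra. Qed.

Lemma centers (a b X1 Y1 X2 Y2 X3 Y3 k m : R) :
 0 < b -> b < a -> 0 < k < 1 -> 0 < m ->
 X1^2+Y1^2 = 1 -> X2^2+Y2^2 = 1 -> X3^2+Y3^2 = 1 ->
 (X1,Y1) <> (X2,Y2) -> (X1,Y1) <> (X3,Y3) -> (X2,Y2) <> (X3,Y3) ->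
 dist (a*X2,b*Y2) (a*X3,b*Y3) * m = gg X2 Y2 X3 Y3 ->
 dist (a*X3,b*Y3) (a*X1,b*Y1) * m = gg X3 Y3 X1 Y1 ->
 dist (a*X1,b*Y1) (a*X2,b*Y2) * m = gg X1 Y1 X2 Y2 ->
 sg X1 Y1 X2 Y2 - k*rho X1 Y1 X2 Y2 - (k^2-1)/2 = 0 ->
 sg X1 Y1 X3 Y3 - k*rho X1 Y1 X3 Y3 - (k^2-1)/2 = 0 ->
 sg X2 Y2 X3 Y3 - k*rho X2 Y2 X3 Y3 - (k^2-1)/2 = 0 ->
 ((X1,Y1)+(X2,Y2)+(X3,Y3) + RtoC k*((X1,Y1)*(X2,Y2)*(X3,Y3)) = 0)%C ->
 ((X1,Y1)*(X2,Y2)+(X1,Y1)*(X3,Y3)+(X2,Y2)*(X3,Y3) + RtoC k = 0)%C ->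
 center h2 (a*X1,b*Y1) (a*X2,b*Y2) (a*X3,b*Y3) = (a*((X1+X2+X3)/3), b*((Y1+Y2+Y3)/3)) /\
 center h7 (a*X1,b*Y1) (a*X2,b*Y2) (a*X3,b*Y3) = (a*(X1+X2+X3), b*(Y1+Y2+Y3)) /\
 center h57 (a*X1,b*Y1) (a*X2,b*Y2) (a*X3,b*Y3) =
   (a*(4/(3+k^2)*(X1+X2+X3)), b*(4/(3+k^2)*(Y1+Y2+Y3))).
Proof.
  intros hb hab hk hm u1 u2 u3 n12 n13 n23 d23 d31 d12 c12 c13 c23 E1 E2.
  pose proof (f_equal fst E2) as E2x.
  unfold Cmult, Cplus, RtoC in E2x; cbn [fst snd] in E2x.
  assert (hr : rho X1 Y1 X2 Y2 + rho X1 Y1 X3 Y3 + rho X2 Y2 X3 Y3 = -k) by (unfold rho; lra).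
  assert (kh : k*(rho X1 Y1 X2 Y2 + rho X1 Y1 X3 Y3 + rho X2 Y2 X3 Y3) = k*(-k)) by (rewrite hr; auto).
  assert (g1p := gg_pos _ _ _ _ u2 u3 n23).
  assert (g2p : 0 < gg X3 Y3 X1 Y1) by (rewrite gg_sym; apply gg_pos; auto).
  assert (g3p := gg_pos _ _ _ _ u1 u2 n12).
  assert (r23 := rho_ge _ _ _ _ u2 u3).
  assert (r31 := rho_ge _ _ _ _ u1 u3).
  assert (r12 := rho_ge _ _ _ _ u1 u2).
  assert (D1e : gg X3 Y3 X1 Y1 + gg X1 Y1 X2 Y2 - gg X2 Y2 X3 Y3 = (3+k^2)/2 + 2*k*rho X2 Y2 X3 Y3)
    by (clear E1 E2; unfold gg, sg, rho in *; lra).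
  assert (D2e : gg X1 Y1 X2 Y2 + gg X2 Y2 X3 Y3 - gg X3 Y3 X1 Y1 = (3+k^2)/2 + 2*k*rho X1 Y1 X3 Y3)
    by (clear E1 E2; unfold gg, sg, rho in *; lra).
  assert (D3e : gg X2 Y2 X3 Y3 + gg X3 Y3 X1 Y1 - gg X1 Y1 X2 Y2 = (3+k^2)/2 + 2*k*rho X1 Y1 X2 Y2)
    by (clear E1 E2; unfold gg, sg, rho in *; lra).
  assert (kr1 : k * rho X2 Y2 X3 Y3 >= -k) by nra.
  assert (kr2 : k * rho X1 Y1 X3 Y3 >= -k) by nra.
  assert (kr3 : k * rho X1 Y1 X2 Y2 >= -k) by nra.
  assert (kk : 0 < (3+k^2)/2 - 2*k) by nra.
  pose proof (X7R _ _ _ _ _ _ _ u1 u2 u3 E1 E2) as I7. cbv zeta in I7.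
  pose proof (X57R _ _ _ _ _ _ _ u1 u2 u3 E1 E2) as I57. cbv zeta in I57.
  clear E1 E2 E2x hr kh.
  rewrite (dist_sym (a*X3,b*Y3)) in d31.
  set (g1 := gg X2 Y2 X3 Y3) in *. set (g2 := gg X3 Y3 X1 Y1) in *. set (g3 := gg X1 Y1 X2 Y2) in *.
  assert (D1p : 0 < g2 + g3 - g1) by lra.
  assert (D2p : 0 < g3 + g1 - g2) by lra.
  assert (D3p : 0 < g1 + g2 - g3) by lra.
  assert (S1 : dist (a*X2,b*Y2) (a*X3,b*Y3) = g1/m) by (rewrite <- d23; field; lra).
  assert (S2 : dist (a*X3,b*Y3) (a*X1,b*Y1) = g2/m) by (rewrite dist_sym, <- d31; field; lra).
  assert (S3 : dist (a*X1,b*Y1) (a*X2,b*Y2) = g3/m) by (rewrite <- d12; field; lra).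
  clear d23 d31 d12 D1e D2e D3e c12 c13 c23 r23 r31 r12 kr1 kr2 kr3.
  split; [|split].
  - rewrite (center_gen _ _ _ _ 1 1 1).
    2,3,4: unfold h2; rewrite ?S1, ?S2, ?S3; field; split; lra.
    cbn [fst snd]. f_equal; field.
  - rewrite (center_gen _ _ _ _ (m/(g2+g3-g1)) (m/(g3+g1-g2)) (m/(g1+g2-g3))).
    2,3,4: unfold h7; rewrite ?S1, ?S2, ?S3; field; repeat split; lra.
    cbn [fst snd]. destruct I7 as [Ix Iy].
    assert (W : 0 < m/(g2+g3-g1) + m/(g3+g1-g2) + m/(g1+g2-g3)).
    { assert (0 < m/(g2+g3-g1)) by (apply Rdiv_lt_0_compat; lra).
      assert (0 < m/(g3+g1-g2)) by (apply Rdiv_lt_0_compat; lra).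
      assert (0 < m/(g1+g2-g3)) by (apply Rdiv_lt_0_compat; lra). lra. }
    f_equal.
    + replace (a * (X1 + X2 + X3)) with (a * (1 * (X1 + X2 + X3))) by ring.
      apply wavg; [lra|]. apply w7; auto; lra.
    + replace (b * (Y1 + Y2 + Y3)) with (b * (1 * (Y1 + Y2 + Y3))) by ring.
      apply wavg; [lra|]. apply w7; auto; lra.
  - rewrite (center_gen _ _ _ _ (g1/(g2+g3-g1)) (g2/(g3+g1-g2)) (g3/(g1+g2-g3))).
    2,3,4: unfold h57; rewrite ?S1, ?S2, ?S3; field; repeat split; lra.
    cbn [fst snd]. destruct I57 as [Ix Iy].
    assert (W : 0 < g1/(g2+g3-g1) + g2/(g3+g1-g2) + g3/(g1+g2-g3)).
    { assert (0 < g1/(g2+g3-g1)) by (apply Rdiv_lt_0_compat; lra).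
      assert (0 < g2/(g3+g1-g2)) by (apply Rdiv_lt_0_compat; lra).
      assert (0 < g3/(g1+g2-g3)) by (apply Rdiv_lt_0_compat; lra). lra. }
    f_equal.
    + apply wavg; [lra|]. apply w57; auto; lra.
    + apply wavg; [lra|]. apply w57; auto; lra.
Qed.


Lemma on_ell_iff (a b X Y : R) : 0 < b -> b < a -> (on_ellipse a b (a*X,b*Y) <-> X^2+Y^2 = 1).
Proof. intros hb hab. unfold on_ellipse; cbn [fst snd].
  replace ((a*X)^2/a^2) with (X^2) by (field; lra).
  replace ((b*Y)^2/b^2) with (Y^2) by (field; lra). tauto. Qed.

Lemma pt_norm (a b : R) (P : pt) : 0 < b -> b < a -> P = (a*(fst P/a), b*(snd P/b)).
Proof. intros. destruct P as [x y]; cbn [fst snd]. f_equal; field; lra. Qed.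

Lemma nondeg_dist (P1 P2 P3 : pt) : nondegenerate P1 P2 P3 -> P1 <> P2 /\ P1 <> P3 /\ P2 <> P3.
Proof.
  unfold nondegenerate, cross, psub. intros h.
  repeat split; intro e; subst; apply h; cbn [fst snd]; ring.
Qed.

Lemma pair_ne (a b X1 Y1 X2 Y2 : R) : (a*X1,b*Y1) <> (a*X2,b*Y2) -> (X1,Y1) <> (X2,Y2).
Proof. intros h e. injection e; intros; subst; auto. Qed.

Lemma C_ne (X1 Y1 X2 Y2 : R) : (X1,Y1) <> (X2,Y2) -> ((X1,Y1) - (X2,Y2))%C <> RtoC 0.
Proof. intros h e. apply h. unfold Cminus, Cplus, Copp, RtoC in e; cbn [fst snd] in e.
  injection e; intros. f_equal; lra. Qed.

Lemma conj_ne (X1 Y1 X2 Y2 : R) : (X1,Y1) <> (X2,Y2) -> (X1, Ropp Y1) <> (X2, Ropp Y2).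
Proof. intros h e. apply h. injection e; intros. f_equal; lra. Qed.

Lemma inv_ex (z : C) : z <> RtoC 0 -> exists i, (z * i = RtoC 1)%C.
Proof. intros h. exists (/z)%C. apply Cinv_r. auto. Qed.

Lemma kstep (k g e2 : C) : (RtoC 1 + two*g + k*e2 = 0)%C -> (e2 + k = 0)%C -> (RtoC 1 + two*g - k*k = 0)%C.
Proof. unfold two; intros; nsatz. Qed.

Lemma kstepR (k g : R) : (RtoC 1 + two*RtoC g - RtoC k*RtoC k = 0)%C -> 1 + 2*g - k^2 = 0.
Proof. intros H. apply (f_equal fst) in H. unfold two, Cminus, Copp, Cmult, Cplus, RtoC in H; cbn [fst snd] in H. lra. Qed.

Lemma sg_conj (X1 Y1 X2 Y2 : R) : sg X1 (Ropp Y1) X2 (Ropp Y2) = sg X1 Y1 X2 Y2.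
Proof. unfold sg; ring. Qed.
Lemma rho_conj (X1 Y1 X2 Y2 : R) : rho X1 (Ropp Y1) X2 (Ropp Y2) = rho X1 Y1 X2 Y2.
Proof. unfold rho; ring. Qed.
Lemma unit_conj (X Y : R) : X^2+Y^2 = 1 -> X^2 + (Ropp Y)^2 = 1.
Proof. intros; nra. Qed.

Lemma e1_norm (k X1 Y1 X2 Y2 X3 Y3 : R) : X1^2+Y1^2 = 1 -> X2^2+Y2^2 = 1 -> X3^2+Y3^2 = 1 ->
  ((X1,Y1)+(X2,Y2)+(X3,Y3) + RtoC k*((X1,Y1)*(X2,Y2)*(X3,Y3)) = 0)%C ->
  (X1+X2+X3)^2 + (Y1+Y2+Y3)^2 = k^2.
Proof. intros u1 u2 u3 E. pose proof (f_equal fst E) as Ex. pose proof (f_equal snd E) as Ey. clear E.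
  unfold Cmult, Cplus, RtoC in Ex, Ey; cbn [fst snd] in Ex, Ey. nsatzp. Qed.

Lemma fwd (a b : R) (P1 P2 P3 : pt) : 0 < b -> b < a -> three_periodic a b P1 P2 P3 ->
  exists X1 Y1 X2 Y2 X3 Y3 m,
  P1 = (a*X1,b*Y1) /\ P2 = (a*X2,b*Y2) /\ P3 = (a*X3,b*Y3) /\ 0 < m /\
  X1^2+Y1^2 = 1 /\ X2^2+Y2^2 = 1 /\ X3^2+Y3^2 = 1 /\
  (X1,Y1) <> (X2,Y2) /\ (X1,Y1) <> (X3,Y3) /\ (X2,Y2) <> (X3,Y3) /\
  dist (a*X2,b*Y2) (a*X3,b*Y3) * m = gg X2 Y2 X3 Y3 /\
  dist (a*X3,b*Y3) (a*X1,b*Y1) * m = gg X3 Y3 X1 Y1 /\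
  dist (a*X1,b*Y1) (a*X2,b*Y2) * m = gg X1 Y1 X2 Y2 /\
  sg X1 Y1 X2 Y2 - k7 a b*rho X1 Y1 X2 Y2 - (k7 a b^2-1)/2 = 0 /\
  sg X1 Y1 X3 Y3 - k7 a b*rho X1 Y1 X3 Y3 - (k7 a b^2-1)/2 = 0 /\
  sg X2 Y2 X3 Y3 - k7 a b*rho X2 Y2 X3 Y3 - (k7 a b^2-1)/2 = 0 /\
  ((X1,Y1)+(X2,Y2)+(X3,Y3) + RtoC (k7 a b)*((X1,Y1)*(X2,Y2)*(X3,Y3)) = 0)%C /\
  ((X1,Y1)*(X2,Y2)+(X1,Y1)*(X3,Y3)+(X2,Y2)*(X3,Y3) + RtoC (k7 a b) = 0)%C.
Proof.
  intros hb hab [hnd [e1 [e2 [e3 [b1 [b2 b3]]]]]].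
  destruct (nondeg_dist _ _ _ hnd) as [n12 [n13 n23]].
  rewrite (pt_norm a b P1) in *; auto.
  rewrite (pt_norm a b P2) in *; auto.
  rewrite (pt_norm a b P3) in *; auto.
  set (X1 := fst P1 / a) in *. set (Y1 := snd P1 / b) in *.
  set (X2 := fst P2 / a) in *. set (Y2 := snd P2 / b) in *.
  set (X3 := fst P3 / a) in *. set (Y3 := snd P3 / b) in *.
  clearbody X1 Y1 X2 Y2 X3 Y3.
  apply on_ell_iff in e1; auto. apply on_ell_iff in e2; auto. apply on_ell_iff in e3; auto.
  apply pair_ne in n12. apply pair_ne in n13. apply pair_ne in n23.
  assert (n21 : (X2,Y2) <> (X1,Y1)) by auto.
  assert (n31 : (X3,Y3) <> (X1,Y1)) by auto.
  assert (n32 : (X3,Y3) <> (X2,Y2)) by auto.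
  pose proof (dist_pos a b _ _ _ _ hb hab e1 e2 n12) as p12.
  pose proof (dist_pos a b _ _ _ _ hb hab e1 e3 n13) as p13.
  pose proof (dist_pos a b _ _ _ _ hb hab e2 e3 n23) as p23.
  pose proof (dist_pos a b _ _ _ _ hb hab e2 e1 n21) as p21.
  pose proof (gg_pos _ _ _ _ e1 e2 n12) as g12.
  pose proof (gg_pos _ _ _ _ e1 e3 n13) as g13.
  pose proof (gg_pos _ _ _ _ e2 e3 n23) as g23.
  pose proof (gg_pos _ _ _ _ e2 e1 n21) as g21.
  pose proof (bis_fwd a b _ _ _ _ _ _ hb hab e1 e2 e3 p12 p13 (Rlt_le _ _ g12) (Rlt_le _ _ g13) b1) as F1.
  pose proof (bis_fwd a b _ _ _ _ _ _ hb hab e2 e3 e1 p23 p21 (Rlt_le _ _ g23) (Rlt_le _ _ g21) b2) as F2.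
  rewrite (dist_sym (a*X2,b*Y2) (a*X1,b*Y1)), (gg_sym X2 Y2 X1 Y1) in F2.
  set (m := gg X1 Y1 X2 Y2 / dist (a*X1,b*Y1) (a*X2,b*Y2)).
  assert (hm : 0 < m) by (apply Rdiv_lt_0_compat; auto).
  assert (m12 : dist (a*X1,b*Y1) (a*X2,b*Y2) * m = gg X1 Y1 X2 Y2) by (unfold m; field; lra).
  assert (m13 : dist (a*X1,b*Y1) (a*X3,b*Y3) * m = gg X1 Y1 X3 Y3)
    by (unfold m; rewrite F1; field; lra).
  assert (m23 : dist (a*X2,b*Y2) (a*X3,b*Y3) * m = gg X2 Y2 X3 Y3)
    by (unfold m; rewrite <- F2; field; lra).
  pose proof (chord_fwd a b m _ _ _ _ hb hab e1 e2 n12 hm m12) as c12.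
  pose proof (chord_fwd a b m _ _ _ _ hb hab e1 e3 n13 hm m13) as c13.
  pose proof (chord_fwd a b m _ _ _ _ hb hab e2 e3 n23 hm m23) as c23.
  set (kp := m^2*(a^2-b^2)). set (gp := 1 - m^2*(a^2+b^2)).
  assert (r12 : sg X1 Y1 X2 Y2 - kp*rho X1 Y1 X2 Y2 - gp = 0) by (unfold kp, gp; unfold gg in c12; unfold sg; lra).
  assert (r13 : sg X1 Y1 X3 Y3 - kp*rho X1 Y1 X3 Y3 - gp = 0) by (unfold kp, gp; unfold gg in c13; unfold sg; lra).
  assert (r23 : sg X2 Y2 X3 Y3 - kp*rho X2 Y2 X3 Y3 - gp = 0) by (unfold kp, gp; unfold gg in c23; unfold sg; lra).
  destruct (inv_ex _ (C_ne _ _ _ _ n12)) as [i12 hi12].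
  destruct (inv_ex _ (C_ne _ _ _ _ n13)) as [i13 hi13].
  destruct (inv_ex _ (C_ne _ _ _ _ n23)) as [i23 hi23].
  destruct (inv_ex _ (C_ne _ _ _ _ (conj_ne _ _ _ _ n12))) as [j12 hj12].
  destruct (inv_ex _ (C_ne _ _ _ _ (conj_ne _ _ _ _ n13))) as [j13 hj13].
  destruct (inv_ex _ (C_ne _ _ _ _ (conj_ne _ _ _ _ n23))) as [j23 hj23].
  assert (q12 := proj2 (Qf_iff kp gp _ _ _ _ e1 e2) r12).
  assert (q13 := proj2 (Qf_iff kp gp _ _ _ _ e1 e3) r13).
  assert (q23 := proj2 (Qf_iff kp gp _ _ _ _ e2 e3) r23).
  rewrite <- (sg_conj X1 Y1 X2 Y2), <- (rho_conj X1 Y1 X2 Y2) in r12.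
  rewrite <- (sg_conj X1 Y1 X3 Y3), <- (rho_conj X1 Y1 X3 Y3) in r13.
  rewrite <- (sg_conj X2 Y2 X3 Y3), <- (rho_conj X2 Y2 X3 Y3) in r23.
  assert (w12 := proj2 (Qf_iff kp gp _ _ _ _ (unit_conj _ _ e1) (unit_conj _ _ e2)) r12).
  assert (w13 := proj2 (Qf_iff kp gp _ _ _ _ (unit_conj _ _ e1) (unit_conj _ _ e3)) r13).
  assert (w23 := proj2 (Qf_iff kp gp _ _ _ _ (unit_conj _ _ e2) (unit_conj _ _ e3)) r23).
  destruct (coreA _ _ _ _ _ _ _ _ hi12 hi13 hi23 q12 q13 q23) as [E1 E2'].
  destruct (coreA _ _ _ _ _ _ _ _ hj12 hj13 hj23 w12 w13 w23) as [W1 _].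
  pose proof (conjstep _ _ _ _ _ _ _ (conj_unit _ _ e1) (conj_unit _ _ e2) (conj_unit _ _ e3) W1) as E2.
  pose proof (kstepR _ _ (kstep _ _ _ E2' E2)) as KK.
  destruct (kappa_facts a b hb hab) as [k0 [k1 [kq _]]].
  assert (hc : 0 < a^2 - b^2) by (replace (a^2-b^2) with ((a-b)*(a+b)) by ring; apply Rmult_lt_0_compat; lra).
  assert (kpq : kp^2*(a^2-b^2) + 2*kp*(a^2+b^2) - 3*(a^2-b^2) = 0).
  { unfold gp in KK. fold kp. replace (kp^2*(a^2-b^2)) with ((a^2-b^2)*kp^2) by ring.
    replace (kp^2) with (3 - 2*m^2*(a^2+b^2)) by lra. unfold kp. ring. }
  assert (kp0 : 0 < kp) by (unfold kp; apply Rmult_lt_0_compat; [apply pow2_gt_0; lra | lra]).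
  assert (hs : 0 < a^2+b^2) by nra.
  assert (kpe : kp = k7 a b).
  { set (k := k7 a b) in *. clearbody k.
    assert ((kp - k)*((a^2-b^2)*(kp+k) + 2*(a^2+b^2)) = 0) by (rewrite <- (Rminus_diag_eq _ _ (eq_refl 0)); nra).
    apply Rmult_integral in H. destruct H. lra. nra. }
  assert (gpe : gp = (k7 a b^2-1)/2) by (rewrite <- kpe; lra).
  rewrite kpe, gpe in r12, r13, r23. rewrite sg_conj, rho_conj in r12, r13, r23.
  rewrite kpe in E1, E2.
  exists X1, Y1, X2, Y2, X3, Y3, m.
  repeat split; auto.
  rewrite (dist_sym (a*X3,b*Y3)), gg_sym; auto.
Qed.


Lemma chord3 (k g z1 z2 z3 w1 w2 w3: C) : (z1*w1 = RtoC 1)%C -> (z2*w2 = RtoC 1)%C -> (z3*w3 = RtoC 1)%C ->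
  (z1+z2+z3 + k*(z1*z2*z3) = 0)%C -> (z1*z2+z1*z3+z2*z3 + k = 0)%C -> (k*k = RtoC 1 + two*g)%C ->
  Qf k g z1 z2 = RtoC 0 /\ Qf k g z1 z3 = RtoC 0 /\ Qf k g z2 z3 = RtoC 0.
Proof. unfold Qf, two; intros; repeat split; nsatz. Qed.

Lemma cross_sq (X1 Y1 X2 Y2 X3 Y3 : R) : X1^2+Y1^2 = 1 -> X2^2+Y2^2 = 1 -> X3^2+Y3^2 = 1 ->
  ((X2-X1)*(Y3-Y1) - (Y2-Y1)*(X3-X1))^2 = 2*gg X1 Y1 X2 Y2*gg X1 Y1 X3 Y3*gg X2 Y2 X3 Y3.
Proof. unfold gg; intros; nsatzp. Qed.

Lemma vieta_R (k Cw Sw : R) (z1 z2 z3 : C) : z1 <> z2 -> z1 <> z3 -> z2 <> z3 ->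
  pc k (Cw,Sw) z1 = (0,0) -> pc k (Cw,Sw) z2 = (0,0) -> pc k (Cw,Sw) z3 = (0,0) ->
  (z1+z2+z3 + RtoC k*(z1*z2*z3) = 0)%C /\ (z1*z2+z1*z3+z2*z3 + RtoC k = 0)%C /\ (z1*z2*z3 = (Cw,Sw))%C.
Proof.
  intros n12 n13 n23 p1 p2 p3.
  destruct z1 as [X1 Y1]; destruct z2 as [X2 Y2]; destruct z3 as [X3 Y3].
  destruct (inv_ex _ (C_ne _ _ _ _ n12)) as [i12 hi12].
  destruct (inv_ex _ (C_ne _ _ _ _ n13)) as [i13 hi13].
  destruct (inv_ex _ (C_ne _ _ _ _ n23)) as [i23 hi23].
  unfold pc in p1, p2, p3.
  destruct (vieta _ _ _ _ _ _ _ _ hi12 hi13 hi23 p1 p2 p3) as [v1 [v2 v3]].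
  split; [|split]; auto. rewrite v3. clear -v1. rewrite <- v1. ring.
Qed.

Lemma bwd (a b Cw Sw : R) : 0 < b -> b < a -> Cw^2+Sw^2 = 1 ->
  exists X1 Y1 X2 Y2 X3 Y3 m,
  three_periodic a b (a*X1,b*Y1) (a*X2,b*Y2) (a*X3,b*Y3) /\ 0 < m /\
  X1^2+Y1^2 = 1 /\ X2^2+Y2^2 = 1 /\ X3^2+Y3^2 = 1 /\
  (X1,Y1) <> (X2,Y2) /\ (X1,Y1) <> (X3,Y3) /\ (X2,Y2) <> (X3,Y3) /\
  dist (a*X2,b*Y2) (a*X3,b*Y3) * m = gg X2 Y2 X3 Y3 /\
  dist (a*X3,b*Y3) (a*X1,b*Y1) * m = gg X3 Y3 X1 Y1 /\
  dist (a*X1,b*Y1) (a*X2,b*Y2) * m = gg X1 Y1 X2 Y2 /\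
  sg X1 Y1 X2 Y2 - k7 a b*rho X1 Y1 X2 Y2 - (k7 a b^2-1)/2 = 0 /\
  sg X1 Y1 X3 Y3 - k7 a b*rho X1 Y1 X3 Y3 - (k7 a b^2-1)/2 = 0 /\
  sg X2 Y2 X3 Y3 - k7 a b*rho X2 Y2 X3 Y3 - (k7 a b^2-1)/2 = 0 /\
  ((X1,Y1)+(X2,Y2)+(X3,Y3) + RtoC (k7 a b)*((X1,Y1)*(X2,Y2)*(X3,Y3)) = 0)%C /\
  ((X1,Y1)*(X2,Y2)+(X1,Y1)*(X3,Y3)+(X2,Y2)*(X3,Y3) + RtoC (k7 a b) = 0)%C /\
  X1+X2+X3 = - k7 a b * Cw /\ Y1+Y2+Y3 = - k7 a b * Sw.
Proof.
  intros hb hab hw.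
  destruct (kappa_facts a b hb hab) as [k0 [k1 [kq _]]].
  set (k := k7 a b) in *. clearbody k.
  destruct (roots_exist k Cw Sw (conj k0 k1) hw) as [z1 [z2 [z3 [u1 [u2 [u3 [n12 [n13 [n23 [p1 [p2 p3]]]]]]]]]]].
  destruct (vieta_R _ _ _ _ _ _ n12 n13 n23 p1 p2 p3) as [E1 [E2 E3]].
  destruct z1 as [X1 Y1]; destruct z2 as [X2 Y2]; destruct z3 as [X3 Y3]. cbn [fst snd] in u1, u2, u3.
  assert (E1' : ((X1,Y1)+(X2,Y2)+(X3,Y3) + RtoC k*((X1,Y1)*(X2,Y2)*(X3,Y3)) = 0)%C) by exact E1.
  assert (SX : X1+X2+X3 = -k*Cw /\ Y1+Y2+Y3 = -k*Sw).
  { pose proof (f_equal fst E1) as Ex. pose proof (f_equal snd E1) as Ey.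
    rewrite E3 in Ex, Ey. unfold Cmult, Cplus, RtoC in Ex, Ey; cbn [fst snd] in Ex, Ey. split; lra. }
  clear E1 E3 p1 p2 p3.
  set (g := (k^2-1)/2).
  assert (KK : (RtoC k * RtoC k = RtoC 1 + two * RtoC g)%C).
  { unfold g, two, Cmult, Cplus, RtoC; cbn [fst snd]. f_equal; field. }
  destruct (chord3 _ _ _ _ _ _ _ _ (conj_unit _ _ u1) (conj_unit _ _ u2) (conj_unit _ _ u3) E1' E2 KK) as [q12 [q13 q23]].
  apply (Qf_iff k g _ _ _ _ u1 u2) in q12.
  apply (Qf_iff k g _ _ _ _ u1 u3) in q13.
  apply (Qf_iff k g _ _ _ _ u2 u3) in q23.
  assert (hc : 0 < a^2 - b^2) by (replace (a^2-b^2) with ((a-b)*(a+b)) by ring; apply Rmult_lt_0_compat; lra).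
  set (m := sqrt (k/(a^2-b^2))).
  assert (hm : 0 < m) by (unfold m; apply sqrt_lt_R0; apply Rdiv_lt_0_compat; lra).
  assert (hm2 : m^2 = k/(a^2-b^2)) by (unfold m; rewrite <- Rsqr_pow2; apply Rsqr_sqrt; apply Rlt_le, Rdiv_lt_0_compat; lra).
  assert (cf : forall X1 Y1 X2 Y2, sg X1 Y1 X2 Y2 - k*rho X1 Y1 X2 Y2 - g = 0 ->
      gg X1 Y1 X2 Y2 = m^2 * ((a^2+b^2) - (a^2-b^2)*rho X1 Y1 X2 Y2)).
  { intros x1 y1 x2 y2 h. rewrite hm2. unfold gg. fold (sg x1 y1 x2 y2).
    replace (sg x1 y1 x2 y2) with (k*rho x1 y1 x2 y2 + g) by lra.
    unfold g. field_simplify; [|lra]. apply (Rmult_eq_reg_r (2*(a^2-b^2))); [|lra].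
    field_simplify; [|lra]. nra. }
  assert (n21 : (X2,Y2) <> (X1,Y1)) by auto.
  assert (n31 : (X3,Y3) <> (X1,Y1)) by auto.
  assert (n32 : (X3,Y3) <> (X2,Y2)) by auto.
  assert (q21 : sg X2 Y2 X1 Y1 - k*rho X2 Y2 X1 Y1 - g = 0) by (unfold sg, rho in *; lra).
  assert (q31 : sg X3 Y3 X1 Y1 - k*rho X3 Y3 X1 Y1 - g = 0) by (unfold sg, rho in *; lra).
  assert (q32 : sg X3 Y3 X2 Y2 - k*rho X3 Y3 X2 Y2 - g = 0) by (unfold sg, rho in *; lra).
  pose proof (chord_bwd a b m _ _ _ _ hb hab u1 u2 hm (cf _ _ _ _ q12)) as m12.
  pose proof (chord_bwd a b m _ _ _ _ hb hab u1 u3 hm (cf _ _ _ _ q13)) as m13.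
  pose proof (chord_bwd a b m _ _ _ _ hb hab u2 u3 hm (cf _ _ _ _ q23)) as m23.
  pose proof (chord_bwd a b m _ _ _ _ hb hab u2 u1 hm (cf _ _ _ _ q21)) as m21.
  pose proof (chord_bwd a b m _ _ _ _ hb hab u3 u1 hm (cf _ _ _ _ q31)) as m31.
  pose proof (chord_bwd a b m _ _ _ _ hb hab u3 u2 hm (cf _ _ _ _ q32)) as m32.
  pose proof (dist_pos a b _ _ _ _ hb hab u1 u2 n12) as p12.
  pose proof (dist_pos a b _ _ _ _ hb hab u1 u3 n13) as p13.
  pose proof (dist_pos a b _ _ _ _ hb hab u2 u3 n23) as p23.
  pose proof (dist_pos a b _ _ _ _ hb hab u2 u1 n21) as p21.
  pose proof (dist_pos a b _ _ _ _ hb hab u3 u1 n31) as p31.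
  pose proof (dist_pos a b _ _ _ _ hb hab u3 u2 n32) as p32.
  pose proof (gg_pos _ _ _ _ u1 u2 n12) as g12.
  pose proof (gg_pos _ _ _ _ u1 u3 n13) as g13.
  pose proof (gg_pos _ _ _ _ u2 u3 n23) as g23.
  pose proof (cross_sq _ _ _ _ _ _ u1 u2 u3) as CS.
  set (Dl := (X2-X1)*(Y3-Y1) - (Y2-Y1)*(X3-X1)) in CS.
  assert (hD : Dl <> 0).
  { intro e. rewrite e in CS. assert (0 < 2 * gg X1 Y1 X2 Y2 * gg X1 Y1 X3 Y3 * gg X2 Y2 X3 Y3).
    { repeat apply Rmult_lt_0_compat; lra. } replace (0^2) with 0 in CS by ring. lra. }
  assert (hab0 : a*b <> 0) by (apply Rmult_integral_contrapositive; split; lra).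
  assert (cr1 : cross (psub (a*X2,b*Y2) (a*X1,b*Y1)) (psub (a*X3,b*Y3) (a*X1,b*Y1)) <> 0).
  { unfold cross, psub; cbn [fst snd]. replace (_ - _) with (a*b*Dl) by (unfold Dl; ring).
    apply Rmult_integral_contrapositive; split; auto. }
  assert (cr2 : cross (psub (a*X3,b*Y3) (a*X2,b*Y2)) (psub (a*X1,b*Y1) (a*X2,b*Y2)) <> 0).
  { unfold cross, psub; cbn [fst snd]. replace (_ - _) with (a*b*Dl) by (unfold Dl; ring).
    apply Rmult_integral_contrapositive; split; auto. }
  assert (cr3 : cross (psub (a*X1,b*Y1) (a*X3,b*Y3)) (psub (a*X2,b*Y2) (a*X3,b*Y3)) <> 0).
  { unfold cross, psub; cbn [fst snd]. replace (_ - _) with (a*b*Dl) by (unfold Dl; ring).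
    apply Rmult_integral_contrapositive; split; auto. }
  exists X1, Y1, X2, Y2, X3, Y3, m.
  split.
  { split; [exact cr1|]. split; [apply on_ell_iff; auto|].
    split; [apply on_ell_iff; auto|]. split; [apply on_ell_iff; auto|].
    split; [apply (bis_bwd a b m); auto|].
    split; [apply (bis_bwd a b m); auto|].
    apply (bis_bwd a b m); auto. }
  unfold g in q12, q13, q23.
  repeat split; auto; lra.
Qed.


Lemma locus_gen (a b : R) (h : R->R->R->R) (lam kh : R) : 0 < b -> b < a -> 0 < lam ->
  kh = lam * k7 a b ->
  (forall X1 Y1 X2 Y2 X3 Y3 m, 0 < m ->
     X1^2+Y1^2 = 1 -> X2^2+Y2^2 = 1 -> X3^2+Y3^2 = 1 ->
     (X1,Y1) <> (X2,Y2) -> (X1,Y1) <> (X3,Y3) -> (X2,Y2) <> (X3,Y3) ->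
     dist (a*X2,b*Y2) (a*X3,b*Y3) * m = gg X2 Y2 X3 Y3 ->
     dist (a*X3,b*Y3) (a*X1,b*Y1) * m = gg X3 Y3 X1 Y1 ->
     dist (a*X1,b*Y1) (a*X2,b*Y2) * m = gg X1 Y1 X2 Y2 ->
     sg X1 Y1 X2 Y2 - k7 a b*rho X1 Y1 X2 Y2 - (k7 a b^2-1)/2 = 0 ->
     sg X1 Y1 X3 Y3 - k7 a b*rho X1 Y1 X3 Y3 - (k7 a b^2-1)/2 = 0 ->
     sg X2 Y2 X3 Y3 - k7 a b*rho X2 Y2 X3 Y3 - (k7 a b^2-1)/2 = 0 ->
     ((X1,Y1)+(X2,Y2)+(X3,Y3) + RtoC (k7 a b)*((X1,Y1)*(X2,Y2)*(X3,Y3)) = 0)%C ->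
     ((X1,Y1)*(X2,Y2)+(X1,Y1)*(X3,Y3)+(X2,Y2)*(X3,Y3) + RtoC (k7 a b) = 0)%C ->
     center h (a*X1,b*Y1) (a*X2,b*Y2) (a*X3,b*Y3) = (a*(lam*(X1+X2+X3)), b*(lam*(Y1+Y2+Y3)))) ->
  forall X, in_locus a b h X <-> on_scaled_ellipse kh a b X.
Proof.
  intros hb hab hl hkh HC X.
  destruct (kappa_facts a b hb hab) as [k0 [k1 _]].
  assert (hkh0 : 0 < kh) by (rewrite hkh; apply Rmult_lt_0_compat; lra).
  split.
  - intros [P1 [P2 [P3 [T HX]]]].
    destruct (fwd a b P1 P2 P3 hb hab T) as (X1 & Y1 & X2 & Y2 & X3 & Y3 & m & e1 & e2 & e3 & hm & u1 & u2 & u3 & n12 & n13 & n23 & d23 & d31 & d12 & c12 & c13 & c23 & E1 & E2).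
    subst P1 P2 P3.
    pose proof (e1_norm _ _ _ _ _ _ _ u1 u2 u3 E1) as N.
    rewrite (HC X1 Y1 X2 Y2 X3 Y3 m) in HX; auto. rewrite <- HX. unfold on_scaled_ellipse; cbn [fst snd].
    rewrite hkh.
    replace ((a * (lam * (X1 + X2 + X3))) ^ 2 / (lam * k7 a b * a) ^ 2 +
      (b * (lam * (Y1 + Y2 + Y3))) ^ 2 / (lam * k7 a b * b) ^ 2) with
      (((X1 + X2 + X3)^2 + (Y1 + Y2 + Y3)^2) / k7 a b ^2) by (field; repeat split; lra).
    rewrite N. field. lra.
  - intro HE. unfold on_scaled_ellipse in HE.
    set (Cw := - fst X / (kh*a)). set (Sw := - snd X / (kh*b)).
    assert (hw : Cw^2 + Sw^2 = 1).
    { rewrite <- HE. unfold Cw, Sw. field. repeat split; lra. }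
    destruct (bwd a b Cw Sw hb hab hw) as (X1 & Y1 & X2 & Y2 & X3 & Y3 & m & T & hm & u1 & u2 & u3 & n12 & n13 & n23 & d23 & d31 & d12 & c12 & c13 & c23 & E1 & E2 & SX & SY).
    exists (a*X1,b*Y1), (a*X2,b*Y2), (a*X3,b*Y3). split; auto.
    rewrite (HC X1 Y1 X2 Y2 X3 Y3 m); auto. rewrite SX, SY. unfold Cw, Sw. rewrite hkh. destruct X as [x y]; cbn [fst snd].
    f_equal; field; repeat split; lra.
Qed.

Theorem theorem1 (a b : R) (hb : 0 < b) (hab : b < a) :
  (forall X : pt, in_locus a b h2 X <-> on_scaled_ellipse (k2 a b) a b X) /\
  (forall X : pt, in_locus a b h7 X <-> on_scaled_ellipse (k7 a b) a b X) /\
  (forall X : pt, in_locus a b h57 X <-> on_scaled_ellipse (k57 a b) a b X).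
Proof.
  destruct (kappa_facts a b hb hab) as [k0 [k1 [_ [_ [e2 e57]]]]].
  split; [|split].
  - apply (locus_gen a b h2 (1/3)); auto; [lra | rewrite e2; field |].
    intros. destruct (centers a b X1 Y1 X2 Y2 X3 Y3 (k7 a b) m) as [C2 _]; auto.
    rewrite C2. f_equal; field.
  - apply (locus_gen a b h7 1); auto; [lra | ring |].
    intros. destruct (centers a b X1 Y1 X2 Y2 X3 Y3 (k7 a b) m) as [_ [C7 _]]; auto.
    rewrite C7. f_equal; ring.
  - apply (locus_gen a b h57 (4/(3+k7 a b^2))); auto.
    + apply Rdiv_lt_0_compat; nra.
    + rewrite e57. field. nra.
    + intros. destruct (centers a b X1 Y1 X2 Y2 X3 Y3 (k7 a b) m) as [_ [_ C57]]; auto.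
Qed.
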